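(* Let $F=(A,R)$ be an abstract argumentation framework and $S\subseteq A$. Then $S$ is an initial set of $F$ if and only if there is a strongly connected component $F'=(A',R')$ of $F$ with $S\subseteq A'$ such that $S$ is an initial set of $F'$ and $S^-\subseteq A'$ (where $S^-$ is computed in $F$).
   Context: An abstract argumentation framework is a pair $F=(A,R)$ with $A$ a finite set and $R\subseteq A\times A$ ($a\to b$ means $(a,b)\in R$). $S^-=\{a\in A\mid \exists b\in S: a\to b\}$. $S$ is admissible if it is conflict-free and every attacker of an element of $S$ is attacked by some element of $S$. An initial set is a non-empty admissible set with no non-empty admissible proper subset. For $X\subseteq A$, $F|_X=(X,R\cap(X\times X))$. A strongly connected component (SCC) of $F$ is a framework $F|_{A'}$ such that there is a directed path in $F|_{A'}$ between any two arguments of $A'$ and $A'$ is maximal with this property. (Every initial set lies inside a single SCC, denoted $\mathrm{SCC}(S)$ in the paper.) *)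

(* Defs.v *)
(* An argumentation framework is represented by a carrier
   finType T, a finite set of arguments X : {set T} and an attack relation
   R : rel T; only attacks between elements of X are relevant, so the
   framework is (X, R ∩ (X×X)). The restriction F|_Y is then simply (Y, R). *)
From mathcomp Require Import all_boot.
Set Implicit Arguments. Unset Strict Implicit. Unset Printing Implicit Defensive.

Section AF.
Variable T : finType.

Definition conflict_free (R : rel T) (S : {set T}) : Prop :=
  forall a b, a \in S -> b \in S -> ~ R a b.

Definition admissible (X : {set T}) (R : rel T) (S : {set T}) : Prop :=
  [/\ S \subset X, conflict_free R S &
      forall a b, a \in S -> b \in X -> R b a -> exists2 c, c \in S & R c b].

Definition initial_set (X : {set T}) (R : rel T) (S : {set T}) : Prop :=
  [/\ S != set0, admissible X R S &
      forall S' : {set T}, S' \proper S -> S' != set0 -> ~ admissible X R S'].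

Definition attackers_of (X : {set T}) (R : rel T) (S : {set T}) : {set T} :=
  [set a in X | [exists b in S, R a b]].

Definition restr_rel (Y : {set T}) (R : rel T) : rel T :=
  fun a b => [&& a \in Y, b \in Y & R a b].

Definition strongly_connected (Y : {set T}) (R : rel T) : Prop :=
  forall a b, a \in Y -> b \in Y -> connect (restr_rel Y R) a b.

Definition is_SCC (X : {set T}) (R : rel T) (Y : {set T}) : Prop :=
  [/\ Y \subset X, strongly_connected Y R &
      forall Z : {set T}, Y \subset Z -> Z \subset X -> strongly_connected Z R -> Z = Y].

End AF.

(* Main.v *)
Require Import Defs.
From mathcomp Require Import all_boot.
Set Implicit Arguments. Unset Strict Implicit. Unset Printing Implicit Defensive.

Section Aux.
Variable T : finType.
Implicit Types (X Y S : {set T}) (R : rel T).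

Definition sccof X R s : {set T} :=
  [set a in X | connect (restr_rel X R) s a && connect (restr_rel X R) a s].

Lemma conn_restr X R s a b :
  connect (restr_rel X R) s a -> connect (restr_rel X R) a b ->
  connect (restr_rel X R) b s -> connect (restr_rel (sccof X R s) R) a b.
Proof.
move=> hsa /connectP [p pth ->] {b}.
elim: p a pth hsa => [|x p IH] a /=; first by [].
case/andP=> hax pth hsa hls.
have hxl : connect (restr_rel X R) x (last x p) by apply/connectP; exists p.
have hxs : connect (restr_rel X R) x s := connect_trans hxl hls.
have hsx : connect (restr_rel X R) s x := connect_trans hsa (connect1 hax).
apply: connect_trans (connect1 _) (IH x pth hsx hls).
move: (hax); rewrite /restr_rel => /and3P [aX xX rax].
rewrite /restr_rel !inE aX xX rax hsa hsx hxs /=.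
by rewrite (connect_trans (connect1 hax) hxs).
Qed.

Lemma conn_mono (Z : {set T}) X R a b : Z \subset X ->
  connect (restr_rel Z R) a b -> connect (restr_rel X R) a b.
Proof.
move=> ZX; apply: connect_sub => x y /and3P [xZ yZ rxy].
by apply: connect1; rewrite /restr_rel (subsetP ZX _ xZ) (subsetP ZX _ yZ) rxy.
Qed.

Lemma sccof_SCC X R s : s \in X -> is_SCC X R (sccof X R s).
Proof.
move=> sX; split.
- by apply/subsetP => a; rewrite inE => /andP [].
- move=> a b; rewrite !inE => /and3P [aX hsa has] /and3P [bX hsb hbs].
  exact: conn_restr hsa (connect_trans has hsb) hbs.
- move=> Z YZ ZX scZ.
  have sY : s \in sccof X R s by rewrite inE sX !connect0.
  apply/eqP; rewrite eqEsubset; apply/andP; split=> //.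
  apply/subsetP => z zZ; rewrite inE (subsetP ZX _ zZ).
  have sZ := subsetP YZ _ sY.
  by rewrite (conn_mono ZX (scZ _ _ sZ zZ)) (conn_mono ZX (scZ _ _ zZ sZ)).
Qed.

End Aux.

Theorem proposition2 (T : finType) (X : {set T}) (R : rel T) (S : {set T}) :
  S \subset X ->
  (initial_set X R S <->
   exists Y : {set T},
     [/\ is_SCC X R Y, S \subset Y, initial_set Y R S &
         attackers_of X R S \subset Y]).
Proof.
move=> SX; split.
- case=> S0 [_ cf def] mini.
  set E := restr_rel X R.
  have allc : forall t s, t \in S -> s \in S -> connect E t s.
    move=> t s tS sS.
    pose S' := [set u in S | connect E u s].
    have S'S : S' \subset S by apply/subsetP => u; rewrite inE => /andP [].
    have : S \subset S'.
      apply: contraT => nS; exfalso; apply: (mini S').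
      - by rewrite properE S'S.
      - by apply/set0Pn; exists s; rewrite inE sS connect0.
      split.
      + exact: subset_trans S'S SX.
      + by move=> a b aS bS; apply: cf; apply: (subsetP S'S).
      + move=> a b; rewrite inE => /andP [aS hAs] bX rba.
        have [c cS rcb] := def a b aS bX rba.
        exists c => //; rewrite inE cS /=.
        have cX := subsetP SX _ cS; have aX := subsetP SX _ aS.
        have e1 : E c b by rewrite /E /restr_rel cX bX rcb.
        have e2 : E b a by rewrite /E /restr_rel aX bX rba.
        exact: connect_trans (connect1 e1) (connect_trans (connect1 e2) hAs).
    by move/subsetP/(_ t tS); rewrite inE => /andP [].
  have [s sS] := set0Pn _ S0.
  have sX := subsetP SX _ sS.
  have SY : S \subset sccof X R s.
    by apply/subsetP => t tS; rewrite inE (subsetP SX _ tS) !allc.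
  have AY : attackers_of X R S \subset sccof X R s.
    apply/subsetP => a; rewrite inE => /andP [aX /existsP [b /andP [bS rab]]].
    have [c cS rca] := def b a bS aX rab.
    have cX := subsetP SX _ cS; have bX := subsetP SX _ bS.
    rewrite inE aX.
    rewrite (connect_trans (allc s c sS cS) (connect1 _)); last by rewrite /E /restr_rel cX aX rca.
    by rewrite (connect_trans (connect1 _) (allc b s bS sS)) // /E /restr_rel aX bX rab.
  exists (sccof X R s); split=> //.
  + exact: sccof_SCC.
  + split=> //.
    * split=> // a b aS bY rba.
      have [YX _ _] := sccof_SCC R sX.
      exact: def a b aS (subsetP YX _ bY) rba.
    * move=> S' pS' S'0 [S'Y cf' def']; apply: (mini S' pS' S'0).
      have S'S : S' \subset S by move: pS'; rewrite properE => /andP [].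
      split.
      -- exact: subset_trans S'S SX.
      -- exact: cf'.
      -- move=> a b aS' bX rba; apply: (def' a b aS' _ rba).
         apply: (subsetP AY); rewrite inE bX; apply/existsP; exists a.
         by rewrite (subsetP S'S _ aS') rba.
- case=> Y [[YX _ _] SYY [S0 [_ cf def] mini] AY].
  split=> //.
  + split=> // a b aS bX rba; apply: (def a b aS _ rba).
    apply: (subsetP AY); rewrite inE bX; apply/existsP; exists a.
    by rewrite aS rba.
  + move=> S' pS' S'0 [S'X cf' def']; apply: (mini S' pS' S'0).
    have S'S : S' \subset S by move: pS'; rewrite properE => /andP [].
    split.
    * exact: subset_trans S'S SYY.
    * exact: cf'.
    * move=> a b aS' bY rba; exact: (def' a b aS' (subsetP YX _ bY) rba).
Qed.
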